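(* Suppose $0<c<1$ and let $b=\tfrac12-c$. For any $x\in\mathbb T$ there exist an integer $n\ge1$ and a point $y\in T^{-n}x$ such that $b\notin O_n^+(y)\cup O^-(y)$.
   Context: $\mathbb T=\mathbb R/\mathbb Z$, $Tx=2x\bmod1$. For $y\in\mathbb T$ and $n\ge1$, $O_n^+(y)=\{y,Ty,\dots,T^{n-1}y\}$ is the finite forward orbit and $O^-(y)=\bigcup_{k\ge1}T^{-k}y$ is the backward orbit. *)

(* Defs.v *)
(* the circle T = R/Z is represented by canonical
   representatives in [0,1); reduction mod 1 is Stdlib's frac_part. *)
From Stdlib Require Import Reals.
Open Scope R_scope.

Definition inT (x : R) : Prop := 0 <= x < 1.

Definition toT (x : R) : R := frac_part x.

Definition dbl (x : R) : R := toT (2 * x).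

Definition dbl_iter (k : nat) (x : R) : R := Nat.iter k dbl x.

Definition fwd_orbit (n : nat) (y : R) (z : R) : Prop :=
  exists k : nat, (k < n)%nat /\ dbl_iter k y = z.

Definition bwd_orbit (y : R) (z : R) : Prop :=
  inT z /\ exists k : nat, (1 <= k)%nat /\ dbl_iter k z = y.

(* Main.v *)
Require Import Defs.
From Stdlib Require Import Reals.
From Stdlib Require Import Lra Lia Classical Arith Wf_nat.
Open Scope R_scope.

Lemma frac_shift (k : Z) (z : R) : 0 <= z < 1 -> frac_part (IZR k + z) = z.
Proof.
  intros Hz. unfold frac_part, Int_part.
  assert (E : up (IZR k + z) = (k + 1)%Z).
  { symmetry; apply tech_up; rewrite plus_IZR; simpl; lra. }
  rewrite E, minus_IZR, plus_IZR. simpl. lra.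
Qed.

Lemma frac_id (z : R) : 0 <= z < 1 -> frac_part z = z.
Proof. intros H. replace z with (IZR 0 + z) at 1 by (simpl; lra). now apply frac_shift. Qed.

Lemma dbl_iter_add a b x : dbl_iter (a + b) x = dbl_iter a (dbl_iter b x).
Proof. induction a; simpl; [reflexivity|]. unfold dbl_iter in *; simpl. now rewrite IHa. Qed.

Lemma seqlem (y : nat -> R) (Hy : forall n, dbl (y (S n)) = y n) :
  forall j m, dbl_iter j (y (j + m)%nat) = y m.
Proof.
  induction j; intros m; [reflexivity|].
  replace (S j) with (j + 1)%nat at 1 by lia.
  rewrite dbl_iter_add. change (dbl_iter j (dbl (y (S (j + m)))) = y m). now rewrite Hy.
Qed.

Lemma key b (y : nat -> R) (Hy : forall n, dbl (y (S n)) = y n)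
  (Hd : forall n p, (0 < p)%nat -> y n <> y (n + p)%nat) :
  ~ (forall n, exists k, dbl_iter k b = y n).
Proof.
  intro H.
  assert (A : forall k n, dbl_iter k b <> y n).
  { intro k; induction k as [k IH] using (well_founded_induction lt_wf).
    intros n Hkn.
    destruct (H (S n)) as [k' Hk'].
    assert (k <= k')%nat.
    { destruct (le_lt_dec k k'); [auto | exfalso; eapply IH; eauto]. }
    set (p := (S k' - k)%nat).
    assert (Tp : dbl_iter p (y n) = y n).
    { rewrite <- Hkn at 1. rewrite <- dbl_iter_add.
      replace (p + k)%nat with (S k') by (unfold p; lia).
      change (dbl (dbl_iter k' b) = y n). rewrite Hk'. apply Hy. }
    destruct (H (n + p)%nat) as [k'' Hk''].
    assert (k <= k'')%nat.
    { destruct (le_lt_dec k k''); [auto | exfalso; eapply IH; eauto]. }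
    set (j := (k'' - k)%nat).
    assert (Hj : y (n + p)%nat = dbl_iter j (y n)).
    { rewrite <- Hkn, <- dbl_iter_add. replace (j + k)%nat with k'' by (unfold j; lia).
      now symmetry. }
    assert (Hb : dbl_iter p (y (n + p)%nat) = y n).
    { replace (n + p)%nat with (p + n)%nat by lia. now apply seqlem. }
    apply (Hd n p); [unfold p; lia|].
    rewrite <- Hb at 1. rewrite Hj, <- dbl_iter_add.
    replace (p + j)%nat with (j + p)%nat by lia.
    rewrite dbl_iter_add, Tp. now symmetry. }
  destruct (H 0%nat) as [k Hk]. eapply A; eauto.
Qed.

Lemma build (b x : R) (y : nat -> R) (Hin : forall n, inT (y n))
  (Hy : forall n, dbl (y (S n)) = y n) (H0 : dbl (y 0%nat) = x)
  (Hd : forall n p, (0 < p)%nat -> y n <> y (n + p)%nat)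
  (Hb : forall n, b <> y n) :
  exists n : nat, (1 <= n)%nat /\
    exists y' : R, inT y' /\ dbl_iter n y' = x /\
      ~ fwd_orbit n y' b /\ ~ bwd_orbit y' b.
Proof.
  pose proof (key b y Hy Hd) as K.
  apply not_all_ex_not in K. destruct K as [N HN].
  exists (S N). split; [lia|]. exists (y N). split; [auto|]. split.
  - change (dbl (dbl_iter N (y N)) = x).
    pose proof (seqlem y Hy N 0) as E. rewrite Nat.add_0_r in E. now rewrite E.
  - split.
    + intros [k [Hk Heq]]. pose proof (seqlem y Hy k (N - k)) as E.
      replace (k + (N - k))%nat with N in E by lia. rewrite E in Heq.
      exact (Hb _ (eq_sym Heq)).
    + intros [_ [k [_ Hk]]]. apply HN. now exists k.
Qed.

Lemma zseq (a : R) (Ha : 0 < a <= 1) :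
  exists z : nat -> R,
  (forall n, 0 < z n <= 1/2) /\ (forall n, 2 * z (S n) = z n) /\ 2 * z 0%nat = a /\
  (forall n p, (0 < p)%nat -> z n <> z (n + p)%nat).
Proof.
  exists (fun n : nat => a / 2 ^ (S n)).
  assert (P : forall n, 1 <= 2 ^ n) by (intro; apply pow_R1_Rle; lra).
  split; [|split; [|split]].
  - intro n. simpl. pose proof (P n). unfold Rdiv. rewrite Rinv_mult.
    assert (0 < / 2 ^ n <= 1).
    { split; [apply Rinv_0_lt_compat; lra|]. rewrite <- Rinv_1. apply Rinv_le_contravar; lra. }
    nra.
  - intro n. simpl. pose proof (P n). field. lra.
  - simpl. field.
  - intros n p Hp E. destruct p as [|p]; [lia|].
    replace (S (n + S p)) with (S n + S p)%nat in E by lia. rewrite pow_add in E.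
    change (2 ^ S p) with (2 * 2 ^ p) in E. pose proof (P (S n)). pose proof (P p).
    unfold Rdiv in E. rewrite Rinv_mult, Rinv_mult in E.
    assert (0 < / 2 ^ S n) by (apply Rinv_0_lt_compat; lra).
    assert (0 < / 2 ^ p <= 1).
    { split; [apply Rinv_0_lt_compat; lra|]. rewrite <- Rinv_1. apply Rinv_le_contravar; lra. }
    assert (U : 0 < a * / 2 ^ S n) by (apply Rmult_lt_0_compat; lra).
    set (u := a * / 2 ^ S n) in *. set (v := / 2 ^ p) in *.
    assert (E2 : u = u * (v / 2)) by (unfold u in *; rewrite E at 1; unfold Rdiv; ring).
    assert (u * (1 - v / 2) = 0) by lra.
    apply Rmult_integral in H3. destruct H3; lra.
Qed.

Theorem lemma6p3 (c : R) (hc : 0 < c < 1) (x : R) (hx : inT x) :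
  exists n : nat, (1 <= n)%nat /\
    exists y : R, inT y /\ dbl_iter n y = x /\
      ~ fwd_orbit n y (toT (1/2 - c)) /\ ~ bwd_orbit y (toT (1/2 - c)).
Proof.
  set (b := toT (1/2 - c)).
  assert (Hb : 0 <= b < 1 /\ b <> 1/2).
  { unfold b, toT. destruct (Rle_lt_dec c (1/2)).
    - rewrite frac_id; lra.
    - replace (1/2 - c) with (IZR (-1) + (3/2 - c)) by (simpl; lra).
      rewrite frac_shift; lra. }
  unfold inT in hx.
  destruct (Rlt_le_dec b (1/2)) as [Hlt | Hge].
  -
    destruct (zseq (1 - x) ltac:(lra)) as [z [Z1 [Z2 [Z3 Z4]]]].
    apply (build b x (fun n => 1 - z n)).
    + intro n. pose proof (Z1 n). unfold inT. lra.
    + intro n. unfold dbl, toT. replace (2 * (1 - z (S n))) with (IZR 1 + (1 - z n))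
        by (rewrite <- (Z2 n); simpl; lra).
      pose proof (Z1 n). apply frac_shift; lra.
    + unfold dbl, toT. replace (2 * (1 - z 0%nat)) with (IZR 1 + x) by (simpl; lra).
      apply frac_shift; lra.
    + intros n p Hp E. apply (Z4 n p Hp). lra.
    + intros n E. pose proof (Z1 n). lra.
  -
    set (a := if Req_EM_T x 0 then 1 else x).
    assert (Ha : 0 < a <= 1 /\ toT a = x).
    { unfold a, toT. destruct (Req_EM_T x 0).
      - split; [lra|]. replace 1 with (IZR 1 + 0) by (simpl; lra). rewrite frac_shift; lra.
      - split; [lra|]. apply frac_id; lra. }
    destruct Ha as [Ha Hax].
    destruct (zseq a Ha) as [z [Z1 [Z2 [Z3 Z4]]]].
    apply (build b x z).
    + intro n. pose proof (Z1 n). unfold inT. lra.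
    + intro n. unfold dbl, toT. rewrite Z2. pose proof (Z1 n). apply frac_id; lra.
    + unfold dbl. now rewrite Z3.
    + exact Z4.
    + intros n E. pose proof (Z1 n). destruct Hb. lra.
Qed.
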